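(* Let $G$ be a compactly generated t.d.l.c. group and $(K,S)$ a generating pair of $G$. If there exists a proper almost $(G,K)$-invariant set $B\subseteq G/K$, then $e(G)>1$.
   Context: A generating pair $(K,S)$ consists of a compact open subgroup $K$ and a finite symmetric set $S\subset G\setminus K$ such that $S\cup K$ generates $G$. The rough Cayley graph $\Gamma(G,K,S)$ has vertex set $G/K$ and an edge joining $gK$ and $gsK$ for all $g\in G$, $s\in S$. The number of ends of a connected locally finite graph is the supremum over finite vertex sets $F$ of the number of infinite components after deleting $F$ and incident edges; $e(G)$ is the number of ends of a rough Cayley graph of $G$. A subset $B\subseteq G/K$ is almost $(G,K)$-invariant if $kB=B$ for all $k\in K$ and the symmetric difference $gB\,\triangle\,B$ is finite for all $g\in G$; it is proper if both $B$ and its complement $G/K\setminus B$ are infinite. *)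

(* Defs.v *)
From Stdlib Require Import List Classical.
Import ListNotations.

Record TopGroup := {
  tg_car :> Type;
  tg_mul : tg_car -> tg_car -> tg_car;
  tg_one : tg_car;
  tg_inv : tg_car -> tg_car;
  tg_assoc : forall x y z, tg_mul x (tg_mul y z) = tg_mul (tg_mul x y) z;
  tg_mul1l : forall x, tg_mul tg_one x = x;
  tg_mul1r : forall x, tg_mul x tg_one = x;
  tg_mulVl : forall x, tg_mul (tg_inv x) x = tg_one;
  tg_mulVr : forall x, tg_mul x (tg_inv x) = tg_one;
  tg_open : (tg_car -> Prop) -> Prop;
  tg_open_full : tg_open (fun _ => True);
  tg_open_inter : forall U V, tg_open U -> tg_open V ->
                  tg_open (fun x => U x /\ V x);
  tg_open_union : forall (I : Type) (U : I -> tg_car -> Prop),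
                  (forall i, tg_open (U i)) -> tg_open (fun x => exists i, U i x);
  tg_mul_cont : forall W, tg_open W -> forall x y, W (tg_mul x y) ->
                exists U V, tg_open U /\ tg_open V /\ U x /\ V y /\
                  (forall u v, U u -> V v -> W (tg_mul u v));
  tg_inv_cont : forall W, tg_open W -> tg_open (fun x => W (tg_inv x))
}.

Arguments tg_mul {t} _ _.
Arguments tg_one {t}.
Arguments tg_inv {t} _.
Arguments tg_open {t} _.

Section TopGroupDefs.
Variable G : TopGroup.

Definition hausdorff : Prop :=
  forall x y : G, x <> y -> exists U V, tg_open U /\ tg_open V /\ U x /\ V y /\
    (forall z, ~ (U z /\ V z)).

Definition compact (A : G -> Prop) : Prop :=
  forall (I : Type) (U : I -> G -> Prop), (forall i, tg_open (U i)) ->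
    (forall x, A x -> exists i, U i x) ->
    exists l : list I, forall x, A x -> exists i, In i l /\ U i x.

Definition connected (A : G -> Prop) : Prop :=
  ~ exists U V, tg_open U /\ tg_open V /\
      (exists x, A x /\ U x) /\ (exists y, A y /\ V y) /\
      (forall x, A x -> U x \/ V x) /\ (forall x, A x -> ~ (U x /\ V x)).

Definition totally_disconnected : Prop :=
  forall A, connected A -> forall x y, A x -> A y -> x = y.

Definition locally_compact : Prop :=
  forall x : G, exists U C, tg_open U /\ U x /\ compact C /\ (forall y, U y -> C y).

Definition tdlc : Prop := hausdorff /\ totally_disconnected /\ locally_compact.

Inductive generated (C : G -> Prop) : G -> Prop :=
  | gen_in x : C x -> generated C x
  | gen_one : generated C tg_one
  | gen_mul x y : generated C x -> generated C y -> generated C (tg_mul x y)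
  | gen_inv x : generated C x -> generated C (tg_inv x).

Definition compactly_generated : Prop :=
  exists C, compact C /\ forall x, generated C x.

Definition subgroup (K : G -> Prop) : Prop :=
  K tg_one /\ (forall x y, K x -> K y -> K (tg_mul x y)) /\
  (forall x, K x -> K (tg_inv x)).

Definition compact_open_subgroup (K : G -> Prop) : Prop :=
  subgroup K /\ tg_open K /\ compact K.

Definition generating_pair (K : G -> Prop) (S : list G) : Prop :=
  compact_open_subgroup K /\
  (forall s, In s S -> In (tg_inv s) S) /\
  (forall s, In s S -> ~ K s) /\
  (forall x, generated (fun y => In y S \/ K y) x).

(* Cosets: the vertex gK of G/K is represented by any g; gK = hK iff g^-1 h in K *)
Definition coset_eq (K : G -> Prop) (g h : G) : Prop := K (tg_mul (tg_inv g) h).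

(* A subset of G/K, represented as a predicate on G constant on cosets *)
Definition coset_set (K : G -> Prop) (B : G -> Prop) : Prop :=
  forall x y, coset_eq K x y -> (B x <-> B y).

Definition finite_cosets (K : G -> Prop) (A : G -> Prop) : Prop :=
  exists l : list G, forall x, A x -> exists y, In y l /\ coset_eq K y x.

Definition infinite_cosets (K : G -> Prop) (A : G -> Prop) : Prop :=
  ~ finite_cosets K A.

Definition translate (g : G) (B : G -> Prop) : G -> Prop :=
  fun x => B (tg_mul (tg_inv g) x).

Definition symdiff (A B : G -> Prop) : G -> Prop :=
  fun x => (A x /\ ~ B x) \/ (~ A x /\ B x).

Definition almost_invariant (K : G -> Prop) (B : G -> Prop) : Prop :=
  coset_set K B /\
  (forall k, K k -> forall x, translate k B x <-> B x) /\
  (forall g, finite_cosets K (symdiff (translate g B) B)).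

Definition proper_set (K : G -> Prop) (B : G -> Prop) : Prop :=
  infinite_cosets K B /\ infinite_cosets K (fun x => ~ B x).

(* Rough Cayley graph Gamma(G,K,S): edge between gK and gsK for all g, s in S *)
Definition rc_adj (K : G -> Prop) (S : list G) (x y : G) : Prop :=
  exists g, coset_eq K x g /\ exists s, In s S /\ coset_eq K (tg_mul g s) y.

Definition avoid (K : G -> Prop) (F : list G) (x : G) : Prop :=
  forall f, In f F -> ~ coset_eq K f x.

Inductive rc_reach (K : G -> Prop) (S : list G) (F : list G) : G -> G -> Prop :=
  | reach_refl x y : avoid K F x -> coset_eq K x y -> rc_reach K S F x y
  | reach_step x y z : rc_reach K S F x y -> rc_adj K S y z -> avoid K F z ->
                       rc_reach K S F x z.

(* the number of ends of Gamma(G,K,S) is > 1: some finite vertex set F has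
   at least two distinct infinite components in its complement *)
Definition more_than_one_end (K : G -> Prop) (S : list G) : Prop :=
  exists (F : list G) (x y : G),
    avoid K F x /\ avoid K F y /\ ~ rc_reach K S F x y /\
    infinite_cosets K (rc_reach K S F x) /\ infinite_cosets K (rc_reach K S F y).

End TopGroupDefs.

(* Main.v *)
Require Import Defs.
From Stdlib Require Import List Classical PropExtensionality FunctionalExtensionality.
Import ListNotations.

Lemma mulKV (G : TopGroup) (x y : G) : tg_mul x (tg_mul (tg_inv x) y) = y.
Proof. rewrite tg_assoc, tg_mulVr, tg_mul1l. reflexivity. Qed.
Lemma mulVK (G : TopGroup) (x y : G) : tg_mul (tg_inv x) (tg_mul x y) = y.
Proof. rewrite tg_assoc, tg_mulVl, tg_mul1l. reflexivity. Qed.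
Lemma mulKr (G : TopGroup) (x y : G) : tg_mul (tg_mul x y) (tg_inv y) = x.
Proof. rewrite <- tg_assoc, tg_mulVr, tg_mul1r. reflexivity. Qed.
Lemma mulKr' (G : TopGroup) (x y : G) : tg_mul (tg_mul x (tg_inv y)) y = x.
Proof. rewrite <- tg_assoc, tg_mulVl, tg_mul1r. reflexivity. Qed.
Lemma inv_uniq (G : TopGroup) (a b : G) : tg_mul a b = tg_one -> b = tg_inv a.
Proof. intro H. rewrite <- (mulVK G a b), H, tg_mul1r. reflexivity. Qed.
Lemma inv_inv (G : TopGroup) (x : G) : tg_inv (tg_inv x) = x.
Proof. symmetry. apply inv_uniq. apply tg_mulVl. Qed.
Lemma inv_mul (G : TopGroup) (x y : G) : tg_inv (tg_mul x y) = tg_mul (tg_inv y) (tg_inv x).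
Proof. symmetry. apply inv_uniq. rewrite tg_assoc, mulKr. apply tg_mulVr. Qed.

Section CE.
Lemma ce_refl (G : TopGroup) K (HK : subgroup G K) (x : G) : coset_eq G K x x.
Proof. unfold coset_eq. rewrite tg_mulVl. apply HK. Qed.
Lemma ce_sym (G : TopGroup) K (HK : subgroup G K) (x y : G) :
  coset_eq G K x y -> coset_eq G K y x.
Proof. unfold coset_eq. intro H. destruct HK as [_ [_ Hi]].
  apply Hi in H. rewrite inv_mul, inv_inv in H. exact H. Qed.
Lemma ce_trans (G : TopGroup) K (HK : subgroup G K) (x y z : G) :
  coset_eq G K x y -> coset_eq G K y z -> coset_eq G K x z.
Proof. unfold coset_eq. intros H1 H2. destruct HK as [_ [Hm _]].
  pose proof (Hm _ _ H1 H2) as H. rewrite <- tg_assoc, mulKV in H. exact H. Qed.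
End CE.

Lemma open_local (G : TopGroup) (W : G -> Prop) :
  (forall x, W x -> exists U, tg_open U /\ U x /\ forall y, U y -> W y) -> tg_open W.
Proof.
  intro H.
  pose (I := {U : G -> Prop | tg_open U /\ forall y, U y -> W y}).
  assert (E : W = (fun x => exists i : I, proj1_sig i x)).
  { apply functional_extensionality; intro x; apply propositional_extensionality; split.
    - intro Wx. destruct (H x Wx) as [U [HU [Ux HUW]]].
      exists (exist _ U (conj HU HUW)). exact Ux.
    - intros [[U [HU HUW]] Ux]. simpl in Ux. auto. }
  rewrite E. apply (tg_open_union G I (fun i => proj1_sig i)). intro i. exact (proj1 (proj2_sig i)).
Qed.

Lemma open_aub (G : TopGroup) (W : G -> Prop) (a b : G) :
  tg_open W -> tg_open (fun u => W (tg_mul a (tg_mul u b))).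
Proof.
  intro HW. apply open_local. intros u Hu.
  destruct (tg_mul_cont G W HW a (tg_mul u b) Hu) as [U1 [V1 [HU1 [HV1 [U1a [V1ub H1]]]]]].
  destruct (tg_mul_cont G V1 HV1 u b V1ub) as [U2 [V2 [HU2 [HV2 [U2u [V2b H2]]]]]].
  exists U2. split; [exact HU2|split; [exact U2u|]].
  intros y Uy. apply H1; auto.
Qed.

Lemma fin_union (G : TopGroup) K (T : Type) (l : list T) (P : T -> G -> Prop) :
  (forall t, In t l -> finite_cosets G K (P t)) ->
  finite_cosets G K (fun x => exists t, In t l /\ P t x).
Proof.
  induction l as [|t l IH]; intro H.
  - exists []. intros x [t [[] _]].
  - destruct (H t (or_introl eq_refl)) as [l1 H1].
    destruct IH as [l2 H2]. { intros t' Ht'. apply H. right. exact Ht'. }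
    exists (l1 ++ l2). intros x [t' [[<-|Ht'] Hp]].
    + destruct (H1 x Hp) as [y [Hy Hc]]. exists y. split; auto. apply in_or_app; auto.
    + destruct (H2 x (ex_intro _ t' (conj Ht' Hp))) as [y [Hy Hc]].
      exists y. split; auto. apply in_or_app; auto.
Qed.

Lemma fin_closure (G : TopGroup) K (HK : subgroup G K) (P Q : G -> Prop) :
  finite_cosets G K Q -> (forall x, P x -> exists g, coset_eq G K g x /\ Q g) ->
  finite_cosets G K P.
Proof.
  intros [l Hl] H. exists l. intros x Px. destruct (H x Px) as [g [Hg Qg]].
  destruct (Hl g Qg) as [y [Hy Hc]]. exists y. split; auto. eapply ce_trans; eauto.
Qed.

Lemma fin_mono (G : TopGroup) K (HK : subgroup G K) (P Q : G -> Prop) :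
  finite_cosets G K Q -> (forall x, P x -> Q x) -> finite_cosets G K P.
Proof. intros H1 H2. apply (fin_closure G K HK P Q H1). intros x Px. exists x.
  split; auto. apply ce_refl; auto. Qed.

Lemma fin_or (G : TopGroup) K (P Q : G -> Prop) :
  finite_cosets G K P -> finite_cosets G K Q -> finite_cosets G K (fun x => P x \/ Q x).
Proof. intros [l1 H1] [l2 H2]. exists (l1 ++ l2). intros x [Px|Qx].
  - destruct (H1 x Px) as [y [? ?]]. exists y. split; auto. apply in_or_app; auto.
  - destruct (H2 x Qx) as [y [? ?]]. exists y. split; auto. apply in_or_app; auto.
Qed.

Lemma double_coset_fin (G : TopGroup) K (HKc : compact_open_subgroup G K) (h : G) :
  finite_cosets G K (fun x => exists k, K k /\ coset_eq G K (tg_mul k h) x).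
Proof.
  destruct HKc as [HK [HKo HKc]].
  destruct (HKc G (fun k u => K (tg_mul (tg_inv (tg_mul k h)) (tg_mul u h)))) as [l Hl].
  - intro k. apply open_aub. exact HKo.
  - intros x Kx. exists x. rewrite tg_mulVl. apply HK.
  - exists (map (fun k => tg_mul k h) l). intros x [k [Kk Hc]].
    destruct (Hl k Kk) as [j [Hj Uj]]. exists (tg_mul j h). split.
    + apply in_map with (f := fun k => tg_mul k h). exact Hj.
    + eapply ce_trans; [exact HK| exact Uj| exact Hc].
Qed.

Lemma fin_inv (G : TopGroup) K (HKc : compact_open_subgroup G K) (P Q : G -> Prop) :
  finite_cosets G K Q -> (forall x, P x -> Q (tg_inv x)) -> finite_cosets G K P.
Proof.
  intros [l Hl] H. pose proof HKc as [HK _].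
  eapply fin_mono; [exact HK| apply (fin_union G K G l (fun y x => exists k, K k /\
     coset_eq G K (tg_mul k (tg_inv y)) x)) |].
  - intros y _. apply double_coset_fin. exact HKc.
  - intros x Px. destruct (Hl _ (H x Px)) as [y [Hy Hc]]. exists y. split; auto.
    exists (tg_inv (tg_mul (tg_inv y) (tg_inv x))). split.
    + apply HK. exact Hc.
    + rewrite inv_mul, !inv_inv, mulKr. apply ce_refl. exact HK.
Qed.

Lemma avoid_coset (G : TopGroup) K (HK : subgroup G K) F (x y : G) :
  avoid G K F x -> coset_eq G K x y -> avoid G K F y.
Proof. intros Ha Hc f Hf Hfy. apply (Ha f Hf). eapply ce_trans; [exact HK|exact Hfy|].
  apply ce_sym; auto. Qed.

Lemma adj_coset_l (G : TopGroup) K (HK : subgroup G K) S (x x' y : G) :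
  coset_eq G K x x' -> rc_adj G K S x y -> rc_adj G K S x' y.
Proof. intros Hc [g [Hg Hs]]. exists g. split; auto. eapply ce_trans; [exact HK| |exact Hg].
  apply ce_sym; auto. Qed.

Lemma adj_coset_r (G : TopGroup) K (HK : subgroup G K) S (x y y' : G) :
  rc_adj G K S x y -> coset_eq G K y y' -> rc_adj G K S x y'.
Proof. intros [g [Hg [s [Hs Hc]]]] Hy. exists g. split; auto. exists s. split; auto.
  eapply ce_trans; eauto. Qed.

Lemma adj_sym (G : TopGroup) K (HK : subgroup G K) S
  (Hsym : forall s, In s S -> In (tg_inv s) S) (x y : G) :
  rc_adj G K S x y -> rc_adj G K S y x.
Proof. intros [g [Hg [s [Hs Hc]]]]. exists (tg_mul g s). split.
  - apply ce_sym; auto.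
  - exists (tg_inv s). split; auto. rewrite mulKr. apply ce_sym; auto. Qed.

Lemma reach_avoid (G : TopGroup) K (HK : subgroup G K) S F (a b : G) :
  rc_reach G K S F a b -> avoid G K F a /\ avoid G K F b.
Proof. induction 1 as [x y Ha Hc| x y z H IH Hadj Hz]; split.
  - exact Ha.
  - eapply avoid_coset; eauto.
  - apply IH.
  - exact Hz. Qed.

Lemma reach_coset_r (G : TopGroup) K (HK : subgroup G K) S F (a b c : G) :
  rc_reach G K S F a b -> coset_eq G K b c -> rc_reach G K S F a c.
Proof. intros H Hc. destruct H as [x y Ha Hxy| x y z H Hadj Hz].
  - apply reach_refl; auto. eapply ce_trans; eauto.
  - eapply reach_step; [exact H| eapply adj_coset_r; eauto| eapply avoid_coset; eauto].
Qed.

Lemma reach_coset_l (G : TopGroup) K (HK : subgroup G K) S F (a a' b : G) :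
  rc_reach G K S F a b -> coset_eq G K a' a -> rc_reach G K S F a' b.
Proof. intros H; revert a'. induction H as [x y Ha Hxy| x y z H IH Hadj Hz]; intros a' Hc.
  - apply reach_refl.
    + eapply avoid_coset; [exact HK|exact Ha|]. apply ce_sym; auto.
    + eapply ce_trans; eauto.
  - eapply reach_step; eauto.
Qed.

Section Conn.
Definition NF (G : TopGroup) K S F (n : G) :=
  avoid G K F n /\ exists f, In f F /\ rc_adj G K S f n.
Definition Pc (G : TopGroup) K S F (x : G) :=
  (exists f, In f F /\ coset_eq G K f x) \/
  (exists n, NF G K S F n /\ rc_reach G K S F n x).

Lemma Pc_coset (G : TopGroup) K (HK : subgroup G K) S F (x y : G) :
  Pc G K S F x -> coset_eq G K x y -> Pc G K S F y.
Proof. intros [[f [Hf Hc]]|[n [Hn Hr]]] Hxy.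
  - left. exists f. split; auto. eapply ce_trans; eauto.
  - right. exists n. split; auto. eapply reach_coset_r; eauto. Qed.

Lemma Pc_adj (G : TopGroup) K (HK : subgroup G K) S F (x y : G) :
  Pc G K S F x -> rc_adj G K S x y -> Pc G K S F y.
Proof. intros HP Hadj.
  destruct (classic (exists f, In f F /\ coset_eq G K f y)) as [Hy|Hy]; [left; exact Hy|].
  assert (Hav : avoid G K F y). { intros f Hf Hc. apply Hy. eauto. }
  right. destruct HP as [[f [Hf Hc]]|[n [Hn Hr]]].
  - exists y. split.
    + split; auto. exists f. split; auto. eapply adj_coset_l; [exact HK| |exact Hadj].
      apply ce_sym; auto.
    + apply reach_refl; auto. apply ce_refl; auto.
  - exists n. split; auto. eapply reach_step; eauto.
Qed.

Lemma Pc_gen (G : TopGroup) K (HK : subgroup G K) S F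
  (Hsym : forall s, In s S -> In (tg_inv s) S) (w : G) :
  generated G (fun y => In y S \/ K y) w ->
  forall y, Pc G K S F y <-> Pc G K S F (tg_mul y w).
Proof.
  induction 1 as [x [Hx|Hx]| |x z _ IH1 _ IH2|x _ IH]; intro y.
  - split; intro HP.
    + eapply Pc_adj; eauto. exists y. split; [apply ce_refl; auto|].
      exists x. split; auto. apply ce_refl; auto.
    + eapply Pc_adj; eauto. exists (tg_mul y x). split; [apply ce_refl; auto|].
      exists (tg_inv x). split; auto. rewrite mulKr. apply ce_refl; auto.
  - assert (Hc : coset_eq G K y (tg_mul y x)). { unfold coset_eq. rewrite mulVK. exact Hx. }
    split; intro HP; eapply Pc_coset; eauto. apply ce_sym; auto.
  - rewrite tg_mul1r. tauto.
  - rewrite (IH1 y), (IH2 (tg_mul y x)), tg_assoc. tauto.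
  - rewrite (IH (tg_mul y (tg_inv x))), mulKr'. tauto.
Qed.
End Conn.

Lemma pigeon (G : TopGroup) K (HK : subgroup G K) (l : list G) (R : G -> G -> Prop)
  (A : G -> Prop) : infinite_cosets G K A -> (forall x, A x -> exists y, In y l /\ R y x) ->
  exists y, In y l /\ infinite_cosets G K (fun x => A x /\ R y x).
Proof.
  intros Hinf H. apply NNPP. intro Hn. apply Hinf.
  eapply fin_mono; [exact HK| apply (fin_union G K G l (fun y x => A x /\ R y x))|].
  - intros y Hy. apply NNPP. intro Hf. apply Hn. exists y. split; auto.
  - intros x Ax. destruct (H x Ax) as [y [Hy Hr]]. exists y. auto.
Qed.

Lemma inf_nonempty (G : TopGroup) K (A : G -> Prop) :
  infinite_cosets G K A -> exists x, A x.
Proof. intro H. apply NNPP. intro Hn. apply H. exists []. intros x Ax. exfalso. eauto. Qed.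

Theorem lemma4p3 (G : TopGroup) (K : G -> Prop) (S : list G) :
  tdlc G -> compactly_generated G -> generating_pair G K S ->
  (exists B : G -> Prop, almost_invariant G K B /\ proper_set G K B) ->
  more_than_one_end G K S.
Proof.
  intros _ _ HGP [B [[Hcs [HKinv Hfin]] [Hinf1 Hinf2]]].
  destruct HGP as [HKc [Hsym [HnotK Hgen]]]. pose proof (proj1 HKc) as HK.
  set (B' := fun x : G => B (tg_inv x)).
  assert (HB'c : forall x y, coset_eq G K x y -> (B' x <-> B' y)).
  { intros x y Hc. pose proof (HKinv _ Hc (tg_inv x)) as H. unfold translate in H.
    rewrite inv_mul, inv_inv, mulKr in H. unfold B'. tauto. }
  assert (HiB1 : infinite_cosets G K B').
  { intro Hf. apply Hinf1. apply (fin_inv G K HKc B B' Hf). intros x Bx. unfold B'.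
    rewrite inv_inv. exact Bx. }
  assert (HiB2 : infinite_cosets G K (fun x => ~ B' x)).
  { intro Hf. apply Hinf2. apply (fin_inv G K HKc _ _ Hf). intros x Bx. unfold B'.
    rewrite inv_inv. exact Bx. }
  assert (HDf : finite_cosets G K (fun x => B' x /\ exists y, rc_adj G K S x y /\ ~ B' y)).
  { set (Q := fun z => exists s, In s S /\ symdiff G (translate G s B) B z).
    assert (HQ : finite_cosets G K Q).
    { apply (fin_union G K G S (fun s z => symdiff G (translate G s B) B z)).
      intros s _. apply Hfin. }
    assert (HQ' : finite_cosets G K (fun g => Q (tg_inv g))).
    { apply (fin_inv G K HKc _ _ HQ). intros x H. exact H. }
    apply (fin_closure G K HK _ _ HQ'). intros x [Bx [y [[g [Hg [s [Hs Hc]]]] Hy]]].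
    exists g. split; [apply ce_sym; auto|]. exists s. split; auto. right. split.
    - unfold translate. rewrite <- inv_mul. intro H. apply Hy.
      apply (HB'c _ _ Hc). exact H.
    - apply (HB'c _ _ Hg). exact Bx. }
  destruct HDf as [lD HlD].
  set (F := tg_one :: lD).
  assert (Hsep : forall a b, rc_reach G K S F a b -> (B' a <-> B' b)).
  { induction 1 as [x y Ha Hc| x y z H IH Hadj Hz]; [apply HB'c; exact Hc|].
    pose proof (proj2 (reach_avoid G K HK S F x y H)) as Hy.
    rewrite IH. split; intro Hb; apply NNPP; intro Hn.
    - destruct (HlD y (conj Hb (ex_intro _ z (conj Hadj Hn)))) as [w [Hw Hc]].
      apply (Hy w (or_intror Hw) Hc).
    - destruct (HlD z (conj Hb (ex_intro _ y (conj (adj_sym G K HK S Hsym _ _ Hadj) Hn))))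
        as [w [Hw Hc]].
      apply (Hz w (or_intror Hw) Hc). }
  assert (HNf : finite_cosets G K (NF G K S F)).
  { eapply fin_mono; [exact HK| apply (fin_union G K G F (fun f n => rc_adj G K S f n))|].
    2:{ intros n [_ [f [Hf Ha]]]. exists f. auto. }
    intros f _.
    eapply fin_mono; [exact HK| apply (fin_union G K G S (fun s y => exists k, K k /\
       coset_eq G K (tg_mul f (tg_mul k s)) y))|].
    - intros s _. destruct (double_coset_fin G K HKc s) as [l Hl].
      exists (map (tg_mul f) l). intros y [k [Kk Hc]].
      destruct (Hl (tg_mul k s) (ex_intro _ k (conj Kk (ce_refl G K HK _)))) as [y0 [Hy0 Hc0]].
      exists (tg_mul f y0). split; [apply in_map; exact Hy0|].
      eapply ce_trans; [exact HK| |exact Hc].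
      unfold coset_eq in *. rewrite inv_mul, <- tg_assoc, (mulVK G f). exact Hc0.
    - intros y [g [Hg [s [Hs Hc]]]]. exists s. split; auto.
      exists (tg_mul (tg_inv f) g). split; [exact Hg|].
      assert (E : tg_mul f (tg_mul (tg_mul (tg_inv f) g) s) = tg_mul g s).
      { rewrite tg_assoc, mulKV. reflexivity. }
      rewrite E. exact Hc. }
  destruct HNf as [lN HlN].
  assert (HPc : forall x, Pc G K S F x).
  { intro x. assert (H1 : Pc G K S F tg_one).
    { left. exists tg_one. split; [left; reflexivity|apply ce_refl; auto]. }
    apply (Pc_gen G K HK S F Hsym x (Hgen x)) in H1. rewrite tg_mul1l in H1. exact H1. }
  assert (Hside : forall C : G -> Prop, infinite_cosets G K C -> exists y x,
     C x /\ rc_reach G K S F y x /\ infinite_cosets G K (rc_reach G K S F y)).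
  { intros C HC.
    assert (HA : infinite_cosets G K (fun x => C x /\ avoid G K F x)).
    { intro Hf. apply HC. eapply fin_mono; [exact HK|
        apply (fin_or G K _ (fun x => exists f, In f F /\ coset_eq G K f x) Hf)|].
      - exists F. intros x [f [Hf' Hc]]. eauto.
      - intros x Cx. destruct (classic (avoid G K F x)) as [Ha|Ha]; [left; auto|right].
        apply NNPP. intro Hn. apply Ha. intros f Hf' Hc. apply Hn. eauto. }
    destruct (pigeon G K HK lN (rc_reach G K S F) _ HA) as [y [Hy Hinf]].
    - intros x [Cx Ax]. destruct (HPc x) as [[f [Hf Hc]]|[n [Hn Hr]]].
      + exfalso. exact (Ax f Hf Hc).
      + destruct (HlN n Hn) as [y [Hy Hc]]. exists y. split; auto.
        eapply reach_coset_l; eauto.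
    - destruct (inf_nonempty G K _ Hinf) as [x [[Cx _] Hr]].
      exists y, x. split; auto. split; auto. intro Hf. apply Hinf.
      eapply fin_mono; [exact HK|exact Hf|]. intros z [_ Hz]. exact Hz. }
  destruct (Hside B' HiB1) as [y1 [x1 [Cx1 [Hr1 Hi1]]]].
  destruct (Hside _ HiB2) as [y2 [x2 [Cx2 [Hr2 Hi2]]]].
  exists F, y1, y2. split; [apply (reach_avoid G K HK S F _ _ Hr1)|].
  split; [apply (reach_avoid G K HK S F _ _ Hr2)|]. split; auto.
  intro H12. apply Cx2. apply (Hsep _ _ Hr2). apply (Hsep _ _ H12).
  apply (Hsep _ _ Hr1). exact Cx1.
Qed.
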